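(* Let $(X,p)$ be a complete partial metric space, let $x_o,y_o\in X$, and let $f,g:X\to X$ be functions such that $\{f^i(x_o)\}_{i\in\mathbb{N}}$ and $\{g^i(y_o)\}_{i\in\mathbb{N}}$ form a Cauchy pair. If $f$ and $g$ are non-expansive, $f$ is weakly orbitally continuous at $x_o$ and $g$ is weakly orbitally continuous at $y_o$, then $f$ and $g$ have a common fixed point.
   Context: A partial metric on $X$ is $p:X\times X\to\mathbb{R}$ with, for all $x,y,z$: $p(x,x)\le p(x,y)$; $p(x,y)=p(y,x)$; $p(x,x)=p(x,y)=p(y,y)$ iff $x=y$; $p(x,y)\le p(x,z)+p(z,y)-p(z,z)$. A point $a$ is a limit of $\{x_i\}$ iff for every $\epsilon>0$ there is $N$ with $p(a,x_i)-p(a,a)<\epsilon$ for all $i>N$ (convergence in the topology generated by the balls $\{y\mid p(x,y)-p(x,x)<\epsilon\}$). $\{x_i\}$ is Cauchy with central distance $r$ if for every $\epsilon>0$ there is $N$ with $|p(x_i,x_j)-r|<\epsilon$ for all $i\ge j>N$; a special limit is a limit $a$ with $p(a,a)=r$; $(X,p)$ is complete if every Cauchy sequence has a special limit. Sequences $\{x_i\},\{y_i\}$ form a Cauchy pair if there is $r\in\mathbb{R}$ such that for every $\epsilon>0$ there is $N$ with $r-\epsilon<\min\{p(x_i,x_i),p(y_j,y_j)\}\le p(x_i,y_j)<r+\epsilon$ for all $i,j>N$. $f^0(x)=x$, $f^{i+1}(x)=f(f^i(x))$. $f$ is non-expansive if $p(f(x),f(y))\le p(x,y)$ for all $x,y$;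 $f$ is weakly orbitally continuous at $x_o$ if whenever $a$ is a special limit of $\{f^i(x_o)\}$, $f(a)$ is a limit of $\{f^i(x_o)\}$. *)

(* Defs.v *)
From Stdlib Require Import Reals.
Open Scope R_scope.

Definition is_partial_metric {X : Type} (p : X -> X -> R) : Prop :=
  (forall x y, p x x <= p x y) /\
  (forall x y, p x y = p y x) /\
  (forall x y, (p x x = p x y /\ p x y = p y y) <-> x = y) /\
  (forall x y z, p x y <= p x z + p z y - p z z).

Definition is_limit {X : Type} (p : X -> X -> R) (s : nat -> X) (a : X) : Prop :=
  forall eps, 0 < eps -> exists N : nat, forall i, (i > N)%nat -> p a (s i) - p a a < eps.

Definition cauchy_central {X : Type} (p : X -> X -> R) (s : nat -> X) (r : R) : Prop :=
  forall eps, 0 < eps -> exists N : nat, forall i j, (i >= j)%nat -> (j > N)%nat ->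
    Rabs (p (s i) (s j) - r) < eps.

Definition is_cauchy {X : Type} (p : X -> X -> R) (s : nat -> X) : Prop :=
  exists r, cauchy_central p s r.

Definition special_limit {X : Type} (p : X -> X -> R) (s : nat -> X) (a : X) : Prop :=
  exists r, cauchy_central p s r /\ is_limit p s a /\ p a a = r.

Definition pm_complete {X : Type} (p : X -> X -> R) : Prop :=
  forall s : nat -> X, is_cauchy p s -> exists a, special_limit p s a.

Definition cauchy_pair {X : Type} (p : X -> X -> R) (s t : nat -> X) : Prop :=
  exists r : R, forall eps, 0 < eps -> exists N : nat, forall i j, (i > N)%nat -> (j > N)%nat ->
    r - eps < Rmin (p (s i) (s i)) (p (t j) (t j)) /\
    Rmin (p (s i) (s i)) (p (t j) (t j)) <= p (s i) (t j) /\
    p (s i) (t j) < r + eps.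

Fixpoint iter {X : Type} (f : X -> X) (i : nat) (x : X) : X :=
  match i with O => x | S i' => f (iter f i' x) end.

Definition non_expansive {X : Type} (p : X -> X -> R) (f : X -> X) : Prop :=
  forall x y, p (f x) (f y) <= p x y.

Definition weakly_orbitally_continuous {X : Type} (p : X -> X -> R) (f : X -> X) (xo : X) : Prop :=
  forall a, special_limit p (fun i => iter f i xo) a -> is_limit p (fun i => iter f i xo) (f a).

(* Main.v *)
Require Import Defs.
From Stdlib Require Import Reals Lra Lia.
Open Scope R_scope.

Lemma le_eps (x y : R) : (forall e, 0 < e -> x <= y + e) -> x <= y.
Proof.
  intros H. destruct (Rle_dec x y) as [h|h]; auto.
  assert (Hd : 0 < (x - y)/2) by lra. specialize (H _ Hd). lra.
Qed.

Lemma rmin_both a b c : c < Rmin a b -> c < a /\ c < b.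
Proof. intros H. pose proof (Rmin_l a b). pose proof (Rmin_r a b). lra. Qed.

Section S.
Context {X : Type} (p : X -> X -> R) (Hpm : is_partial_metric p).

Lemma central_unique s r1 r2 : cauchy_central p s r1 -> cauchy_central p s r2 -> r1 = r2.
Proof.
  intros C1 C2.
  assert (forall e, 0 < e -> Rabs (r1 - r2) <= 0 + e).
  { intros e He. assert (He2 : 0 < e/2) by lra.
    destruct (C1 _ He2) as [N1 HN1]. destruct (C2 _ He2) as [N2 HN2].
    specialize (HN1 (S (N1+N2)) (S (N1+N2)) (le_n _) ltac:(lia)).
    specialize (HN2 (S (N1+N2)) (S (N1+N2)) (le_n _) ltac:(lia)).
    apply Rabs_def2 in HN1. apply Rabs_def2 in HN2.
    apply Rlt_le, Rabs_def1; lra. }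
  pose proof (le_eps _ _ H). pose proof (Rabs_pos (r1 - r2)).
  assert (Rabs (r1 - r2) = 0) by lra.
  destruct (Rcase_abs (r1 - r2)) as [h|h].
  - rewrite Rabs_left in H2; lra.
  - rewrite Rabs_right in H2; lra.
Qed.

Lemma fix_lemma (f : X -> X) xo r a :
  cauchy_central p (fun i => iter f i xo) r ->
  is_limit p (fun i => iter f i xo) a -> p a a = r ->
  non_expansive p f ->
  is_limit p (fun i => iter f i xo) (f a) -> f a = a.
Proof.
  destruct Hpm as [H1 [H2 [H3 H4]]].
  intros C La Haa NE Lfa.
  assert (A1 : p a (f a) <= r /\ p (f a) (f a) <= r).
  { split; apply le_eps; intros e He; assert (He' : 0 < e/3) by lra;
    destruct (C _ He') as [N1 HN1]; destruct (La _ He') as [N2 HN2];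
    set (k := S (N1+N2));
    pose proof (HN1 (S k) (S k) (le_n _) ltac:(unfold k; lia)) as c1;
    pose proof (HN2 k ltac:(unfold k; lia)) as c2;
    pose proof (HN2 (S k) ltac:(unfold k; lia)) as c3;
    pose proof (NE a (iter f k xo)) as ne;
    pose proof (H4 a (f a) (f (iter f k xo))) as t;
    pose proof (H1 (f a) (f (iter f k xo))) as t2;
    rewrite (H2 (f (iter f k xo)) (f a)) in t;
    unfold k in *; simpl in *; apply Rabs_def2 in c1; lra. }
  assert (A2 : r <= p (f a) (f a)).
  { apply le_eps; intros e He; assert (He' : 0 < e/2) by lra.
    destruct (C _ He') as [N1 HN1]; destruct (Lfa _ He') as [N2 HN2].
    set (k := S (N1+N2)).
    pose proof (HN1 k k (le_n _) ltac:(unfold k; lia)) as c1.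
    pose proof (HN2 k ltac:(unfold k; lia)) as c2.
    pose proof (H1 (iter f k xo) (f a)) as t.
    rewrite (H2 (iter f k xo) (f a)) in t.
    unfold k in *; simpl in *; apply Rabs_def2 in c1. lra. }
  pose proof (H1 a (f a)).
  symmetry. apply H3. lra.
Qed.

End S.

Theorem theorem7p9 (X : Type) (p : X -> X -> R) (xo yo : X) (f g : X -> X) :
  is_partial_metric p ->
  pm_complete p ->
  cauchy_pair p (fun i => iter f i xo) (fun i => iter g i yo) ->
  non_expansive p f ->
  non_expansive p g ->
  weakly_orbitally_continuous p f xo ->
  weakly_orbitally_continuous p g yo ->
  exists z, f z = z /\ g z = z.
Proof.
  intros Hpm Hc [r HCP] NEf NEg Wf Wg.
  pose proof Hpm as [H1 [H2 [H3 H4]]].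
  assert (Cx : cauchy_central p (fun i => iter f i xo) r).
  { intros eps He. assert (He' : 0 < eps/3) by lra.
    destruct (HCP _ He') as [N HN]. exists N. intros i j Hij Hj.
    destruct (HN i (S N) ltac:(lia) ltac:(lia)) as [a1 [_ a3]].
    destruct (HN j (S N) ltac:(lia) ltac:(lia)) as [b1 [_ b3]].
    apply rmin_both in a1. apply rmin_both in b1.
    pose proof (H4 (iter f i xo) (iter f j xo) (iter g (S N) yo)).
    pose proof (H1 (iter f j xo) (iter f i xo)).
    rewrite (H2 (iter g (S N) yo) (iter f j xo)) in H.
    rewrite (H2 (iter f j xo) (iter f i xo)) in H0.
    apply Rabs_def1; lra. }
  assert (Cy : cauchy_central p (fun i => iter g i yo) r).
  { intros eps He. assert (He' : 0 < eps/3) by lra.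
    destruct (HCP _ He') as [N HN]. exists N. intros i j Hij Hj.
    destruct (HN (S N) i ltac:(lia) ltac:(lia)) as [a1 [_ a3]].
    destruct (HN (S N) j ltac:(lia) ltac:(lia)) as [b1 [_ b3]].
    apply rmin_both in a1. apply rmin_both in b1.
    pose proof (H4 (iter g i yo) (iter g j yo) (iter f (S N) xo)).
    pose proof (H1 (iter g j yo) (iter g i yo)).
    rewrite (H2 (iter g i yo) (iter f (S N) xo)) in H.
    rewrite (H2 (iter g j yo) (iter g i yo)) in H0.
    apply Rabs_def1; lra. }
  destruct (Hc _ (ex_intro _ r Cx)) as [a Sa].
  destruct (Hc _ (ex_intro _ r Cy)) as [b Sb].
  pose proof (Wf a Sa) as Lfa. pose proof (Wg b Sb) as Lgb.
  destruct Sa as [ra [Ca [La Haa]]].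
  destruct Sb as [rb [Cb [Lb Hbb]]].
  rewrite <- (central_unique p _ _ _ Cx Ca) in Haa.
  rewrite <- (central_unique p _ _ _ Cy Cb) in Hbb.
  pose proof (fix_lemma p Hpm f xo r a Cx La Haa NEf Lfa) as Fa.
  pose proof (fix_lemma p Hpm g yo r b Cy Lb Hbb NEg Lgb) as Gb.
  assert (Hab : p a b <= r).
  { apply le_eps; intros e He; assert (He' : 0 < e/5) by lra.
    destruct (HCP _ He') as [N1 HN1]; destruct (La _ He') as [N2 HN2];
    destruct (Lb _ He') as [N3 HN3].
    set (k := S (N1+N2+N3)).
    destruct (HN1 k k ltac:(unfold k; lia) ltac:(unfold k; lia)) as [c1 [_ c3]].
    pose proof (HN2 k ltac:(unfold k; lia)) as c4.
    pose proof (HN3 k ltac:(unfold k; lia)) as c5.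
    pose proof (H4 a b (iter f k xo)).
    pose proof (H4 (iter f k xo) b (iter g k yo)).
    rewrite (H2 (iter g k yo) b) in H0.
    unfold k in *; simpl in *. apply rmin_both in c1. lra. }
  pose proof (H1 a b).
  assert (a = b) by (apply H3; lra).
  subst b. exists a. split; assumption.
Qed.
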